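(* Let $k\ge 3$ and let $D$ be a digraph on $n$ vertices with $\delta^0(D)\ge\lceil (n+k)/2\rceil-1$. Let $S=(s_1,\dots,s_k)$ be a sequence of distinct vertices of $D$, let $C$ be a longest $S$-cycle in $D$, suppose $C$ is not Hamiltonian, and let $H$ be the subdigraph of $D$ induced by $V(D)\setminus V(C)$. Let $F$ be the set of vertices of $C$ which receive an edge from some vertex of $H$, and $T$ the set of vertices of $C$ which send an edge to some vertex of $H$. Then no vertex of $C$ which lies in $T$ has its successor on $C$ in $F$.
   Context: Digraphs have no loops and at most one edge in each direction between any two vertices; paths and cycles are directed. $\delta^0(D)=\min\{\delta^+(D),\delta^-(D)\}$. An $S$-cycle is a directed cycle in $D$ encountering $s_1,\dots,s_k$ in this order. The successor of $x$ on $C$ is the vertex following $x$ along the direction of $C$. *)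

(* Defs.v *)
From mathcomp Require Import all_boot.
Set Implicit Arguments. Unset Strict Implicit. Unset Printing Implicit Defensive.

(* A digraph on a finite vertex type V is an irreflexive relation e : rel V
   (e x y = there is an edge x -> y); a relation automatically has at most one
   edge in each direction between two vertices. *)
Definition digraph (V : finType) (e : rel V) : Prop := irreflexive e.

Definition outdeg (V : finType) (e : rel V) (v : V) : nat := #|[set w | e v w]|.
Definition indeg (V : finType) (e : rel V) (v : V) : nat := #|[set w | e w v]|.

Definition min_semideg_ge (V : finType) (e : rel V) (d : nat) : Prop :=
  forall v : V, d <= outdeg e v /\ d <= indeg e v.

(* A directed cycle, given by the cyclic sequence of its (distinct) vertices
   c = [:: x_0; ...; x_{m-1}] with edges x_i -> x_{i+1} and x_{m-1} -> x_0. *)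
Definition dicycle (V : finType) (e : rel V) (c : seq V) : bool :=
  [&& uniq c, 2 <= size c & cycle e c].

(* An S-cycle: a directed cycle encountering s_1, ..., s_k in this (cyclic)
   order, i.e. some rotation of c contains S as a subsequence. *)
Definition S_cycle (V : finType) (e : rel V) (S c : seq V) : bool :=
  dicycle e c && has (fun i => subseq S (rot i c)) (iota 0 (size c)).

(* The successor of x on C is [next c x] (mathcomp path.v). *)

(* Main.v *)
Require Import Defs.
From mathcomp Require Import all_boot.
From mathcomp Require Import zify.
Set Implicit Arguments. Unset Strict Implicit. Unset Printing Implicit Defensive.

Definition eH (V : finType) (e : rel V) (C : seq V) : rel V :=
  fun u v => e u v && (v \notin C).

Lemma path_eH_notin (V : finType) (e : rel V) (C : seq V) a p :
  path (eH e C) a p -> all (fun v => v \notin C) p.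
Proof.
elim: p a => //= v p IH a /andP[/andP[_ hv] hp]; by rewrite hv (IH v hp).
Qed.

Lemma connect_eH_notin (V : finType) (e : rel V) (C : seq V) a b :
  a \notin C -> connect (eH e C) a b -> b \notin C.
Proof.
move=> ha /connectP[p hp ->].
have : all (fun v => v \notin C) (a :: p) by rewrite /= ha (path_eH_notin hp).
by move/allP; apply; apply: mem_last.
Qed.

Lemma has_rot_iota (T : eqType) (S c : seq T) i :
  0 < size c -> subseq S (rot i c) -> has (fun i => subseq S (rot i c)) (iota 0 (size c)).
Proof.
move=> hc hs; apply/hasP; case: (ltnP i (size c)) => hi.
  by exists i; rewrite // mem_iota.
by exists 0; rewrite ?mem_iota // rot0 -(rot_oversize hi).
Qed.

Lemma sub_cons_ins (T : eqType) (x : T) s P : subseq (x :: s) (x :: P ++ s).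
Proof. by rewrite /= eqxx suffix_subseq. Qed.

Lemma insert_contra (V : finType) (e : rel V) (S C : seq V) w a b :
  S_cycle e S C -> (forall C', S_cycle e S C' -> size C' <= size C) ->
  w \in C -> a \notin C -> connect (eH e C) a b -> e w a -> e b (next C w) -> False.
Proof.
move=> hSC hmax wC aC /connectP[p0 hp0 ->] ewa.
case: (shortenP hp0) => p hp up _ eb {hp0}.
have pnot : all (fun v => v \notin C) (a :: p) by rewrite /= aC (path_eH_notin hp).
move: hSC; rewrite /S_cycle /dicycle => /andP[/and3P[uC sC cC] /hasP[j _ hj]].
have wD : w \in rot j C by rewrite mem_rot.
have [D1 [D2 eD]] : exists D1 D2, rot j C = D1 ++ w :: D2.
  by move: wD; case/splitPr => D1 D2; exists D1, D2.
have eDw : rot (size D1) (rot j C) = w :: (D2 ++ D1).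
  by rewrite eD -cat_cons rot_size_cat.
have uDw : uniq (w :: (D2 ++ D1)) by rewrite -eDw !rot_uniq.
have cDw : cycle e (w :: (D2 ++ D1)) by rewrite -eDw !rot_cycle.
have nDw : next (w :: (D2 ++ D1)) w = next C w.
  by rewrite -eDw next_rot ?rot_uniq // next_rot.
have memt : forall v, v \in D2 ++ D1 -> v \in C.
  move=> v hv; rewrite -(mem_rot j) eD mem_cat inE.
  by move: hv; rewrite mem_cat => /orP[]->; rewrite ?orbT.
have sDw : size (w :: (D2 ++ D1)) = size C by rewrite -eDw !size_rot.
case et : (D2 ++ D1) => [|y t'].
  by move: sDw sC; rewrite et /= => <-.
rewrite et in uDw cDw nDw memt sDw.
have nwy : next C w = y by rewrite -nDw /= eqxx.
rewrite nwy in eb.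
have hS : S_cycle e S (w :: (a :: p) ++ y :: t').
  apply/andP; split; last first.
    have -> : w :: (a :: p) ++ y :: t' = (w :: (a :: p) ++ D2) ++ D1.
      by rewrite -et catA.
    apply: (has_rot_iota (i := size (w :: (a :: p) ++ D2))).
      by rewrite size_cat.
    rewrite rot_size_cat; apply: (subseq_trans hj); rewrite eD.
    apply: cat_subseq => //; exact: sub_cons_ins.
  rewrite /dicycle; apply/and3P; split.
  - rewrite cons_uniq mem_cat negb_or cat_uniq up.
    move: uDw; rewrite cons_uniq => /andP[-> ->]; rewrite !andbT.
    apply/andP; split.
      apply/negP => wp; move/allP: pnot => /(_ _ wp); by rewrite wC.
    apply/hasPn => v /memt vC; apply/negP => vp; move/allP: pnot => /(_ _ vp).
    by rewrite vC.
  - by [].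
  - rewrite /cycle rcons_cat cat_path /= ewa (sub_path _ hp) /=; last first.
      by move=> u v /andP[].
    move: cDw; rewrite /cycle /= => /andP[_ ->]; by rewrite eb.
have := hmax _ hS; rewrite /= size_cat /= -sDw /=; lia.
Qed.

Definition InC (V : finType) (e : rel V) (C : seq V) a := [set w | (w \in C) && e w a].
Definition OutC (V : finType) (e : rel V) (C : seq V) b := [set w | (w \in C) && e b w].
Definition Anc (V : finType) (e : rel V) (C : seq V) a :=
  [set u | (u \notin C) && connect (eH e C) u a].
Definition Desc (V : finType) (e : rel V) (C : seq V) b := [set v | connect (eH e C) b v].

Lemma card_C (V : finType) (C : seq V) : uniq C -> #|[set v | v \in C]| = size C.
Proof. by move=> uC; rewrite cardsE; apply/card_uniqP. Qed.

Lemma count_io (V : finType) (e : rel V) (S C : seq V) a b :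
  S_cycle e S C -> (forall C', S_cycle e S C' -> size C' <= size C) ->
  a \notin C -> connect (eH e C) a b ->
  #|InC e C a| + #|OutC e C b| <= size C.
Proof.
move=> hSC hmax aC hab.
have uC : uniq C by move: hSC => /andP[/and3P[]].
have inj : injective (next C) := can_inj (prev_next uC).
have h1 : next C @: InC e C a \subset [set v | v \in C] :\: OutC e C b.
  apply/subsetP => v /imsetP[w]; rewrite inE => /andP[wC ewa] ->.
  rewrite !inE mem_next wC andbT; apply/negP => ebn.
  exact: (insert_contra hSC hmax wC aC hab ewa ebn).
have := subset_leq_card h1; rewrite card_imset // cardsD.
have -> : [set v | v \in C] :&: OutC e C b = OutC e C b.
  by apply/setIidPr/subsetP => v; rewrite !inE => /andP[].
have : OutC e C b \subset [set v | v \in C] by apply/subsetP => v; rewrite !inE => /andP[].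
move/subset_leq_card; rewrite card_C //; lia.
Qed.

Lemma indeg_le (V : finType) (e : rel V) (C : seq V) a :
  irreflexive e -> a \notin C -> indeg e a + 1 <= #|InC e C a| + #|Anc e C a|.
Proof.
move=> irr aC.
have aA : a \in Anc e C a by rewrite inE aC connect0.
have h : [set w | e w a] \subset InC e C a :|: (Anc e C a :\ a).
  apply/subsetP => w; rewrite !inE => ewa.
  case wC: (w \in C) => /=; first by rewrite ewa.
  apply/andP; split; first by apply/negP => /eqP ewq; rewrite ewq irr in ewa.
  by apply: connect1; rewrite /eH ewa.
have := subset_leq_card h; rewrite /indeg (cardsD1 a (Anc e C a)) aA.
have := cardsU (InC e C a) (Anc e C a :\ a); lia.
Qed.

Lemma outdeg_le (V : finType) (e : rel V) (C : seq V) b :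
  irreflexive e -> b \notin C -> outdeg e b + 1 <= #|OutC e C b| + #|Desc e C b|.
Proof.
move=> irr bC.
have bA : b \in Desc e C b by rewrite inE connect0.
have h : [set w | e b w] \subset OutC e C b :|: (Desc e C b :\ b).
  apply/subsetP => w; rewrite !inE => ebw.
  case wC: (w \in C) => /=; first by rewrite ebw.
  apply/andP; split; first by apply/negP => /eqP ewq; rewrite ewq irr in ebw.
  by apply: connect1; rewrite /eH ebw wC.
have := subset_leq_card h; rewrite /outdeg (cardsD1 b (Desc e C b)) bA.
have := cardsU (OutC e C b) (Desc e C b :\ b); lia.
Qed.

Lemma keyK (V : finType) (e : rel V) (S C : seq V) a b :
  digraph e ->
  min_semideg_ge e ((#|V| + size S).+1./2 - 1) ->
  S_cycle e S C -> (forall C', S_cycle e S C' -> size C' <= size C) ->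
  a \notin C -> b \notin C -> connect (eH e C) a b ->
  #|V| + size S <= size C + #|Anc e C a| + #|Desc e C b|.
Proof.
move=> irr hdeg hSC hmax aC bC hab.
have h1 := count_io hSC hmax aC hab.
have h2 := indeg_le irr aC.
have h3 := outdeg_le irr bC.
have [_ h4] := hdeg a. have [h5 _] := hdeg b.
have := odd_double_half (#|V| + size S).+1; rewrite -muln2.
have := leq_b1 (odd (#|V| + size S).+1).
lia.
Qed.

Lemma inter_big (T : finType) (A B X : {set T}) :
  A \subset X -> B \subset X -> #|X| < #|A| + #|B| -> exists v, (v \in A) && (v \in B).
Proof.
move=> hA hB hlt.
have : #|A :|: B| <= #|X| by apply: subset_leq_card; rewrite subUset hA hB.
have := cardsU A B => hU hle.
have : 0 < #|A :&: B| by have := subset_leq_card (subsetIl A B); lia.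
by rewrite card_gt0 => /set0Pn[v]; rewrite inE => hv; exists v.
Qed.

Theorem corollary7 (V : finType) (e : rel V) (k : nat) (S C : seq V) :
  digraph e ->
  3 <= k ->
  min_semideg_ge e ((#|V| + k).+1./2 - 1) ->
  size S = k -> uniq S ->
  S_cycle e S C ->
  (forall C' : seq V, S_cycle e S C' -> size C' <= size C) ->
  size C < #|V| ->
  let F := [set v in C | [exists h, (h \notin C) && e h v]] in
  let T := [set v in C | [exists h, (h \notin C) && e v h]] in
  forall x, x \in C -> x \in T -> next C x \notin F.
Proof.
move=> irr hk hdeg hSk uS hSC hmax hsz F T x xC.
rewrite !inE xC /= => /existsP[h /andP[hC exh]].
rewrite mem_next xC /=; apply/negP => /existsP[h' /andP[h'C eh'y]].
rewrite -hSk in hdeg.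
have uC : uniq C by move: hSC => /andP[/and3P[]].
case hh: (connect (eH e C) h h').
  exact: (insert_contra hSC hmax xC hC hh exh eh'y).
pose Hs := [set v | v \notin C].
have cH : #|Hs| + size C = #|V|.
  rewrite -(card_C uC) -(cardsC [set v | v \in C]) addnC; congr (_ + _).
  by apply: eq_card => v; rewrite !inE.
have sA : forall a, Anc e C a \subset Hs.
  by move=> a; apply/subsetP => v; rewrite !inE => /andP[].
have sD : forall b, b \notin C -> Desc e C b \subset Hs.
  move=> b bC; apply/subsetP => v; rewrite !inE => hv.
  exact: (connect_eH_notin bC hv).
have K1 := keyK irr hdeg hSC hmax hC hC (connect0 _ h).
have K2 := keyK irr hdeg hSC hmax h'C h'C (connect0 _ h').
have d1 : #|Desc e C h| + #|Anc e C h'| <= #|Hs|.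
  rewrite leqNgt; apply/negP => hlt.
  have [v /andP[] ] := inter_big (sD _ hC) (sA h') hlt.
  rewrite !inE => hv /andP[_ hv'].
  by rewrite (connect_trans hv hv') in hh.
have [v /andP[]] : exists v, (v \in Anc e C h) && (v \in Desc e C h').
  apply: inter_big (sA h) (sD _ h'C) _; lia.
rewrite !inE => /andP[_ hv1] hv2.
have K3 := keyK irr hdeg hSC hmax h'C hC (connect_trans hv2 hv1).
lia.
Qed.
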